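(* Let $H$ be an abelian group with an alternating $\mathbb{Z}$-bilinear form $\langle-,-\rangle$, and let $z\in\ker\mu$. Then the kernel of the composition \[ Z_2(\mathbb{Q}[H^{(1)}])_{(z)}\longrightarrow C_2(\mathbb{Q}[H])_{(z)}\longrightarrow \hat C_2(\mathbb{Q}[H])_{(z)}, \] where the first map is induced by the inclusion $\mathbb{Q}[H^{(1)}]\hookrightarrow\mathbb{Q}[H]$ and the second is the quotient projection, equals $B_2(\mathbb{Q}[H^{(1)}])_{(z)}$.
   Context: $\mu:H\to\mathrm{Hom}_{\mathbb{Z}}(H,\mathbb{Z})$, $\mu(x)(y)=\langle x,y\rangle$; $H^{(1)}:=H\setminus\ker\mu$. $\mathbb{Q}[S]$ ($S\subset H$) is the $\mathbb{Q}$-vector space with basis symbols $[x]$, $x\in S$; $\mathbb{Q}[H]$ is a Lie algebra via $[[x],[y]]=\langle x,y\rangle[x+y]$ and $\mathbb{Q}[H^{(1)}]$ is a Lie subalgebra. Chevalley–Eilenberg chains: $C_p(\mathfrak g)=\bigwedge^p_{\mathbb{Q}}\mathfrak g$, $\partial(x_1\wedge\cdots\wedge x_p)=\sum_{i<j}(-1)^{i+j}[x_i,x_j]\wedge x_1\wedge\cdots\widehat{x_i}\cdots\widehat{x_j}\cdots\wedge x_p$. For $S\in\{H,H^{(1)}\}$, $p>0$, $w\in H$, $C_p(\mathbb{Q}[S])_{(w)}$ is the span of $[u_1]\wedge\cdots\wedge[u_p]$ with $u_i\in S$, $\sum u_i=w$; this is a subcomplex, with cycles $Z_p(\mathbb{Q}[S])_{(w)}$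 and boundaries $B_p(\mathbb{Q}[S])_{(w)}$ (boundaries of elements of $C_{p+1}(\mathbb{Q}[S])_{(w)}$). $\hat I$ is the ideal of $\bigwedge\mathbb{Q}[H]$ generated by all $[u+v]\wedge[x]-[u]\wedge[x+v]-[v]\wedge[x+u]$, $u,v,x\in H$; $\hat C_2(\mathbb{Q}[H])_{(w)}=C_2(\mathbb{Q}[H])_{(w)}/(\hat I\cap C_2(\mathbb{Q}[H])_{(w)})$. *)

(* Defs.v *)
From HB Require Import structures.
From mathcomp Require Import all_boot all_order all_algebra.
From mathcomp Require Import finmap.
From mathcomp.multinomials Require Import monalg.
Set Implicit Arguments. Unset Strict Implicit. Unset Printing Implicit Defensive.
Import GRing.Theory Num.Theory.
Local Open Scope ring_scope.

Definition alt_bilinear (H : zmodType) (form : H -> H -> int) : Prop :=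
  [/\ forall x y z, form (x + y) z = form x z + form y z,
      forall x y z, form x (y + z) = form x y + form x z
    & forall x, form x x = 0].

Definition in_kermu (H : zmodType) (form : H -> H -> int) (x : H) : Prop :=
  forall y, form x y = 0.
Definition H1 (H : zmodType) (form : H -> H -> int) (x : H) : Prop :=
  ~ in_kermu form x.
Definition allH (H : zmodType) (x : H) : Prop := True.

(* The tensor algebra T(Q[H]) : Q-vector space with basis the words in H;
   the word [:: x1; ...; xp] stands for [x1] (x) ... (x) [xp]. *)
Definition Tens (H : zmodType) := {malg rat[seq H]}.

Section Tensor.
Variable H : zmodType.
Variable form : H -> H -> int.

Definition tmul (u v : Tens H) : Tens H :=
  \sum_(k <- enum_fset (msupp u)) \sum_(l <- enum_fset (msupp v))
     (u@_k * v@_l) *: << k ++ l >>.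

Definition word_in (S : H -> Prop) (k : seq H) : Prop := forall x, x \in k -> S x.

(* u lies in the span of the words of length p, letters in S, letter-sum w.
   With p > 0 this is (a lift of) C_p(Q[S])_(w). *)
Definition inC (p : nat) (S : H -> Prop) (w : H) (u : Tens H) : Prop :=
  forall k, k \in msupp u ->
    [/\ size k = p, word_in S k & \sum_(x <- k) x = w].

Definition inT (S : H -> Prop) (u : Tens H) : Prop :=
  forall k, k \in msupp u -> word_in S k.

Inductive tideal (S : H -> Prop) (G : Tens H -> Prop) : Tens H -> Prop :=
| tideal_gen g : G g -> tideal S G g
| tideal0 : tideal S G 0
| tidealD u v : tideal S G u -> tideal S G v -> tideal S G (u + v)
| tidealZ (a : rat) u : tideal S G u -> tideal S G (a *: u)
| tidealMl a u : inT S a -> tideal S G u -> tideal S G (tmul a u)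
| tidealMr a u : inT S a -> tideal S G u -> tideal S G (tmul u a).

Definition inQ (S : H -> Prop) (v : Tens H) : Prop :=
  forall k, k \in msupp v -> size k = 1%N /\ word_in S k.

(* generators  v (x) v,  v \in Q[S],  of the ideal defining the exterior
   algebra  /\ Q[S] = T(Q[S]) / < v (x) v > *)
Definition ext_rel (S : H -> Prop) (g : Tens H) : Prop :=
  exists v, inQ S v /\ g = tmul v v.

(* the lifts to T(Q[H]) of the generators of the ideal I^ :
   [u+v] /\ [x] - [u] /\ [x+v] - [v] /\ [x+u] *)
Definition ihat_gen (g : Tens H) : Prop :=
  exists u v x : H,
    g = << [:: u + v; x] >> - << [:: u; x + v] >> - << [:: v; x + u] >>.

(* Chevalley--Eilenberg boundary on a word x_1 ... x_p (0-based indices;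
   (-1)^(i+j) has the same parity as for 1-based indices):
   sum_{i<j} (-1)^(i+j) <x_i,x_j> [x_i+x_j] x_1 .. ^x_i .. ^x_j .. x_p,
   using the bracket [[x],[y]] = <x,y>[x+y]. *)
Definition drop2 (k : seq H) (i j : nat) : seq H :=
  [seq nth 0 k l | l <- iota 0 (size k) & (l != i) && (l != j)].

Definition bdw (k : seq H) : Tens H :=
  \sum_(i < size k) \sum_(j < size k | (i < j)%N)
    ((-1) ^+ (i + j) * (form (nth 0 k i) (nth 0 k j))%:~R) *:
      << (nth 0 k i + nth 0 k j) :: drop2 k i j >>.

Definition bd (u : Tens H) : Tens H :=
  \sum_(k <- enum_fset (msupp u)) u@_k *: bdw k.
End Tensor.

(* Main.v *)
Require Import Defs.
From HB Require Import structures.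
From mathcomp Require Import all_boot all_order all_algebra.
From mathcomp Require Import finmap.
From mathcomp.multinomials Require Import monalg.
From mathcomp Require Import zify ssrAC.
From Stdlib Require Import Classical ClassicalEpsilon.
Import GRing.Theory Num.Theory.
Local Open Scope ring_scope.

Module Base.
Set Implicit Arguments. Unset Strict Implicit. Unset Printing Implicit Defensive.
Local Open Scope ring_scope.

Section Lin.
Context {H : zmodType}.

Definition lin (f : seq H -> Tens H) (u : Tens H) : Tens H :=
  \sum_(k <- msupp u) u@_k *: f k.

Lemma linEw f (D : {fset seq H}) u : (msupp u `<=` D)%fset ->
  lin f u = \sum_(k <- D) u@_k *: f k.
Proof.
move/fsubsetP=> sub.
rewrite /lin [RHS](bigID (fun k => k \in msupp u)) /=.
rewrite [X in _ = _ + X]big1 ?addr0; last first.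
  by move=> k /mcoeff_outdom ->; rewrite scale0r.
rewrite -[RHS]big_filter; apply: perm_big.
apply: uniq_perm; rewrite ?filter_uniq ?fset_uniq //.
by move=> k; rewrite mem_filter; case: (boolP (k \in msupp u)) => // /sub ->.
Qed.

Lemma linD f u v : lin f (u + v) = lin f u + lin f v.
Proof.
rewrite (@linEw f (msupp u `|` msupp v)%fset) ?msuppD_le //.
rewrite (@linEw f (msupp u `|` msupp v)%fset u) ?fsubsetUl //.
rewrite (@linEw f (msupp u `|` msupp v)%fset v) ?fsubsetUr //.
by rewrite -big_split /=; apply: eq_bigr => k _; rewrite mcoeffD scalerDl.
Qed.

Lemma linZ f a u : lin f (a *: u) = a *: lin f u.
Proof.
rewrite (@linEw f (msupp u)) ?msuppZ_le // /lin scaler_sumr.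
by apply: eq_bigr => k _; rewrite mcoeffZ scalerA.
Qed.

Lemma lin0 f : lin f 0 = 0.
Proof. by rewrite /lin msupp0 big_seq_fset0. Qed.

Lemma linN f u : lin f (- u) = - lin f u.
Proof. by rewrite -scaleN1r linZ scaleN1r. Qed.

Lemma linB f u v : lin f (u - v) = lin f u - lin f v.
Proof. by rewrite linD linN. Qed.

Lemma linU f k : lin f << k >> = f k.
Proof. by rewrite /lin msuppU oner_eq0 big_seq_fset1 mcoeffUU scale1r. Qed.

Lemma lin_sum f (I : Type) (r : seq I) (F : I -> Tens H) :
  lin f (\sum_(i <- r) F i) = \sum_(i <- r) lin f (F i).
Proof.
elim: r => [|i r IH]; first by rewrite !big_nil lin0.
by rewrite !big_cons linD IH.
Qed.

Lemma lin_lin f g u : lin f (lin g u) = lin (fun k => lin f (g k)) u.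
Proof. by rewrite [lin g u]/lin lin_sum; apply: eq_bigr => k _; rewrite linZ. Qed.

Lemma lin_addf f g u : lin (fun k => f k + g k) u = lin f u + lin g u.
Proof. by rewrite /lin -big_split; apply: eq_bigr => k _; rewrite scalerDr. Qed.

Lemma eq_lin f g u : (forall k, k \in msupp u -> f k = g k) -> lin f u = lin g u.
Proof. by move=> h; rewrite /lin !big_seq; apply: eq_bigr => k /h ->. Qed.

Definition Wd (P : seq H -> Prop) (t : Tens H) := forall k, k \in msupp t -> P k.

Lemma Wd0 P : Wd P 0. Proof. by move=> k; rewrite msupp0 inE. Qed.
Lemma WdD P u v : Wd P u -> Wd P v -> Wd P (u + v).
Proof.
move=> hu hv k /(fsubsetP (msuppD_le u v)); rewrite inE => /orP[/hu|/hv] //.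
Qed.
Lemma WdZ P a u : Wd P u -> Wd P (a *: u).
Proof. by move=> hu k /(fsubsetP (msuppZ_le a u)) /hu. Qed.
Lemma WdU (P : seq H -> Prop) k : P k -> Wd P << k >>.
Proof. by move=> hk l; rewrite msuppU oner_eq0 inE => /eqP ->. Qed.
Lemma Wd_lin P f u : (forall k, k \in msupp u -> Wd P (f k)) -> Wd P (lin f u).
Proof.
move=> h; rewrite /lin big_seq; apply: big_ind.
- exact: Wd0.
- exact: WdD.
- by move=> k hk; apply: WdZ; apply: h.
Qed.

Lemma tmulE (u v : Tens H) :
  @tmul H u v = lin (fun k => lin (fun l => << k ++ l >>) v) u.
Proof.
rewrite /tmul /lin; apply: eq_bigr => k _; rewrite scaler_sumr.
by apply: eq_bigr => l _; rewrite scalerA.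
Qed.

Lemma tmulU (k l : seq H) : @tmul H << k >> << l >> = << k ++ l >>.
Proof. by rewrite tmulE linU linU. Qed.

Lemma tmulDl u v w : @tmul H (u + v) w = tmul u w + tmul v w.
Proof. by rewrite !tmulE linD. Qed.

Lemma tmulDr u v w : @tmul H u (v + w) = tmul u v + tmul u w.
Proof.
rewrite !tmulE -lin_addf; apply: eq_lin => k _.
by rewrite linD.
Qed.

Lemma lin_swap (F : seq H -> seq H -> Tens H) (u a : Tens H) :
  lin (fun l => lin (fun k => F l k) a) u = lin (fun k => lin (fun l => F l k) u) a.
Proof.
rewrite /lin; under eq_bigr do rewrite scaler_sumr.
rewrite exchange_big /=; apply: eq_bigr => k _; rewrite scaler_sumr.
by apply: eq_bigr => l _; rewrite !scalerA mulrC.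
Qed.

Lemma lin_ind (Q : Tens H -> Prop) f u : Q 0 -> (forall x y, Q x -> Q y -> Q (x + y)) ->
  (forall a x, Q x -> Q (a *: x)) -> (forall k, k \in msupp u -> Q (f k)) -> Q (lin f u).
Proof.
move=> h0 hD hZ h; rewrite /lin big_seq; apply: big_ind => //.
by move=> k hk; apply: hZ; apply: h.
Qed.

Lemma lin_zero u : lin (fun _ => 0) u = 0.
Proof. by rewrite /lin big1 // => k _; rewrite scaler0. Qed.

Lemma scaleU (a : rat) (k : seq H) : a *: << k >> = << a *g k >>.
Proof. by apply/malgP => l; rewrite mcoeffZ !mcoeffU mulr_natr. Qed.

Lemma lin_id u : lin (fun k => << k >>) u = u.
Proof.
rewrite [RHS]monalgE /lin; apply: eq_bigr => k _; exact: scaleU.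
Qed.

Lemma WdN P u : Wd P u -> Wd P (- u).
Proof. by move=> h k; rewrite msuppN; apply: h. Qed.
Lemma WdB P u v : Wd P u -> Wd P v -> Wd P (u - v).
Proof. by move=> hu hv; apply: WdD => //; apply: WdN. Qed.

End Lin.

Lemma bdw2 (H : zmodType) (form : H -> H -> int) (a b : H) :
  bdw form [:: a; b] = - (form a b)%:~R *: << [:: a + b] >>.
Proof.
rewrite /bdw /=.
rewrite !big_ord_recl big_ord0 /=.
do 3! rewrite ?big_mkcond /= ?big_ord_recl ?big_ord0 /= /bump /= /drop2 /=.
by rewrite !expr1 !addr0 !add0r mulN1r.
Qed.

Lemma bdw3 (H : zmodType) (form : H -> H -> int) (a b c : H) :
  bdw form [:: a; b; c] = - (form a b)%:~R *: << [:: a + b; c] >>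
    + (form a c)%:~R *: << [:: a + c; b] >> - (form b c)%:~R *: << [:: b + c; a] >>.
Proof.
have e2 : (-1:rat)^+2 = 1 by rewrite expr2 mulN1r opprK.
have e3 : (-1:rat)^+3 = -1 by rewrite exprS e2 mulr1.
rewrite /bdw /=.
rewrite !big_ord_recl big_ord0 /=.
do 4! rewrite ?big_mkcond /= ?big_ord_recl ?big_ord0 /= /bump /= /drop2 /=.
rewrite (_ : (0 + (1 + 0))%N = 1%N) // (_ : (0 + (1 + (1 + 0)))%N = 2%N) //.
rewrite (_ : (1 + 0 + (1 + (1 + 0)))%N = 3%N) // expr1 e2 e3 !mul1r !mulN1r.
move: (<<[:: a + b; c]>>) (<<[:: a + c; b]>>) (<<[:: b + c; a]>>) => X Y Z.
by rewrite !addr0 !add0r !scaleNr.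
Qed.


End Base.

Module Work.
Import Base.
Set Implicit Arguments. Unset Strict Implicit. Unset Printing Implicit Defensive.
Local Open Scope ring_scope.

Section Ideal.
Context {H : zmodType} (S : H -> Prop) (G : Tens H -> Prop).

Lemma tidealB u v : tideal S G u -> tideal S G v -> tideal S G (u - v).
Proof. by move=> hu hv; apply: tidealD => //; rewrite -scaleN1r; apply: tidealZ. Qed.

Lemma tideal_lin f u : (forall k, k \in msupp u -> tideal S G (f k)) -> tideal S G (lin f u).
Proof.
move=> h; apply: lin_ind => //; [exact: tideal0 | exact: tidealD | exact: tidealZ].
Qed.

Lemma inQU x : S x -> inQ S << [:: x] >>.
Proof. by move=> hx; apply: (@WdU _ (fun k => size k = 1%N /\ word_in S k)); split => // y; rewrite inE => /eqP ->. Qed.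

Lemma tideal_sym x y : (forall g, ext_rel S g -> G g) -> S x -> S y ->
  tideal S G (<< [:: x; y] >> + << [:: y; x] >>).
Proof.
move=> hG hx hy.
have hv (v : Tens H) : inQ S v -> tideal S G (tmul v v).
  by move=> hv; apply: tideal_gen; apply: hG; exists v.
have hQ : inQ S (<< [:: x] >> + << [:: y] >>).
  by apply: (@WdD _ (fun k => size k = 1%N /\ word_in S k)); apply: inQU.
have e : << [:: x; y] >> + << [:: y; x] >> =
   tmul (<< [:: x] >> + << [:: y] >>) (<< [:: x] >> + << [:: y] >>)
   - tmul << [:: x] >> << [:: x] >> - tmul << [:: y] >> << [:: y] >>.
  rewrite tmulDl !tmulDr !tmulU /=.
  move: (<< [:: x; y] >>) (<< [:: y; x] >>) (<< [:: x; x] >>) (<< [:: y; y] >>) => A B C D.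
  apply/eqP; rewrite eq_sym !subr_eq; apply/eqP.
  by rewrite [RHS](AC 4 ((4*1)*(2*3))).
by rewrite e; apply: tidealB; [apply: tidealB|]; apply: hv => //; apply: inQU.
Qed.

End Ideal.

Section Main.
Context (H : zmodType) (form : H -> H -> int) (z : H).
Hypothesis hf : alt_bilinear form.
Hypothesis hz : in_kermu form z.

Local Notation S := (H1 form).

Lemma formDl x y w : form (x + y) w = form x w + form y w.
Proof. by case: hf. Qed.
Lemma formDr x y w : form w (x + y) = form w x + form w y.
Proof. by case: hf. Qed.
Lemma formxx x : form x x = 0.
Proof. by case: hf. Qed.
Lemma form0l w : form 0 w = 0.
Proof. by apply: (@addrI _ (form 0 w)); rewrite addr0 -formDl addr0. Qed.
Lemma form0r w : form w 0 = 0.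
Proof. by apply: (@addrI _ (form w 0)); rewrite addr0 -formDr addr0. Qed.
Lemma formNl x w : form (- x) w = - form x w.
Proof. by apply: (@addrI _ (form x w)); rewrite -formDl !subrr form0l. Qed.
Lemma formNr x w : form w (- x) = - form w x.
Proof. by apply: (@addrI _ (form w x)); rewrite -formDr !subrr form0r. Qed.
Lemma formC x y : form x y = - form y x.
Proof.
have := formxx (x + y); rewrite formDl !formDr !formxx add0r addr0 => /eqP.
by rewrite addr_eq0 => /eqP.
Qed.
Lemma formzl y : form z y = 0.
Proof. exact: hz. Qed.
Lemma formzr y : form y z = 0.
Proof. by rewrite formC formzl oppr0. Qed.

Lemma S_of a y : form a y != 0 -> S a.
Proof. by move=> /eqP h hk; apply: h; apply: hk. Qed.
Lemma S_ofr a y : form a y != 0 -> S y.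
Proof. by rewrite formC oppr_eq0 => /S_of. Qed.
Lemma S_ex a : S a -> exists y, form a y != 0.
Proof.
move=> ha; apply: NNPP => hn; apply: ha => y; apply: NNPP => hy; apply: hn.
by exists y; apply/eqP.
Qed.
Lemma null n : ~ S n -> forall y, form n y = 0.
Proof. by move=> hn; apply: NNPP. Qed.
Lemma S_nadd n s : ~ S n -> S s -> S (n + s).
Proof. by move=> hn /S_ex [y hy]; apply: (@S_of _ y); rewrite formDl null // add0r. Qed.
Lemma S_addn n s : ~ S n -> S s -> S (s + n).
Proof. by move=> hn hs; rewrite addrC; apply: S_nadd. Qed.
Lemma S_opp a : S a -> S (- a).
Proof. by move=> /S_ex [y hy]; apply: (@S_of _ y); rewrite formNl oppr_eq0. Qed.
Lemma S_zsub a : S a -> S (z - a).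
Proof. by move=> /S_ex [y hy]; apply: (@S_of _ y); rewrite formDl formzl add0r formNl oppr_eq0. Qed.
Lemma S_dbl s : S s -> S (s + s).
Proof.
move=> /S_ex [y hy]; apply: (@S_of _ y); rewrite formDl.
by move: hy; rewrite -mulr2n mulrn_eq0.
Qed.
Lemma S_trpl s : S s -> S (s + (s + s)).
Proof.
move=> /S_ex [y hy]; apply: (@S_of _ y); rewrite !formDl.
by move: hy; rewrite addrA -mulr2n -mulrSr mulrn_eq0.
Qed.
Lemma notSz : ~ S z.
Proof. by move=> h; apply: h; apply: hz. Qed.

Lemma avoid2 a b y1 y2 : form a y1 != 0 -> form b y2 != 0 ->
  exists w, form a w != 0 /\ form b w != 0.
Proof.
move=> h1 h2.
case: (boolP (form b y1 == 0)) => [/eqP b1|b1]; last by exists y1.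
case: (boolP (form a y2 == 0)) => [/eqP a2|a2]; last by exists y2.
by exists (y1 + y2); rewrite !formDr b1 a2 add0r addr0.
Qed.

Lemma avoid3 a b c : S a -> S b -> S c ->
  exists w, [/\ form a w != 0, form b w != 0 & form c w != 0].
Proof.
move=> /S_ex [y1 h1] /S_ex [y2 h2] /S_ex [y h3].
have [w [ha hb]] := avoid2 h1 h2.
have e x : [/\ form x (w + y) = form x w + form x y,
    form x (w + y + y) = form x w + form x y + form x y &
    form x (w + y + y + y) = form x w + form x y + form x y + form x y].
  by rewrite !formDr.
case: (e a) (e b) (e c) => ea1 ea2 ea3 [eb1 eb2 eb3] [ec1 ec2 ec3].
case: (boolP (form c w == 0)) => [/eqP c0|c0]; last by exists w.
case: (boolP ((form a (w + y) != 0) && (form b (w + y) != 0))) => [/andP[p q]|n1].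
  by exists (w + y); split => //; rewrite ec1 c0 add0r.
case: (boolP ((form a (w + y + y) != 0) && (form b (w + y + y) != 0))) => [/andP[p q]|n2].
  by exists (w + y + y); split => //; rewrite ec2 c0 add0r -mulr2n mulrn_eq0.
case: (boolP ((form a (w + y + y + y) != 0) && (form b (w + y + y + y) != 0))) => [/andP[p q]|n3].
  exists (w + y + y + y); split => //; rewrite ec3 c0 add0r -mulr2n -mulrSr mulrn_eq0 //.
exfalso; move: n1 n2 n3 ha hb h3.
rewrite ea1 ea2 ea3 eb1 eb2 eb3.
move: (form a w) (form a y) (form b w) (form b y) (form c y) => A1 A2 B1 B2 C2.
move=> n1 n2 n3 ha hb hc.
lia.
Qed.

Lemma inC0 p w : inC p S w 0.
Proof. by move=> k; rewrite msupp0 inE. Qed.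
Lemma inCD p w u v : inC p S w u -> inC p S w v -> inC p S w (u + v).
Proof. exact: (@WdD _ (fun k => [/\ size k = p, word_in S k & \sum_(x <- k) x = w])). Qed.
Lemma inCZ p w a u : inC p S w u -> inC p S w (a *: u).
Proof. exact: (@WdZ _ (fun k => [/\ size k = p, word_in S k & \sum_(x <- k) x = w])). Qed.

Definition K (t : Tens H) : Prop :=
  exists d, inC 3 S z d /\ tideal S (ext_rel S) (t - bd form d).

Lemma bdE u : bd form u = lin (bdw form) u.
Proof. by []. Qed.

Lemma K_ideal t : tideal S (ext_rel S) t -> K t.
Proof. by move=> h; exists 0; split; [exact: inC0 | rewrite bdE lin0 subr0]. Qed.
Lemma K0 : K 0.
Proof. exact/K_ideal/tideal0. Qed.
Lemma KD t1 t2 : K t1 -> K t2 -> K (t1 + t2).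
Proof.
move=> [d1 [h1 i1]] [d2 [h2 i2]]; exists (d1 + d2); split; first exact: inCD.
by rewrite bdE linD -!bdE opprD addrACA; apply: tidealD.
Qed.
Lemma KZ a t : K t -> K (a *: t).
Proof.
move=> [d [h i]]; exists (a *: d); split; first exact: inCZ.
by rewrite bdE linZ -bdE -scalerBr; apply: tidealZ.
Qed.
Lemma KN t : K t -> K (- t).
Proof. by move=> h; rewrite -scaleN1r; apply: KZ. Qed.
Lemma KB t1 t2 : K t1 -> K t2 -> K (t1 - t2).
Proof. by move=> h1 h2; apply: KD => //; apply: KN. Qed.
Lemma K_bd d : inC 3 S z d -> K (bd form d).
Proof. by move=> h; exists d; split => //; rewrite subrr; apply: tideal0. Qed.
Lemma K_lin f u : (forall k, k \in msupp u -> K (f k)) -> K (lin f u).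
Proof. by move=> h; apply: lin_ind => //; [exact: K0|exact: KD|exact: KZ]. Qed.
Lemma K_sum (I : Type) (r : seq I) (F : I -> Tens H) : (forall i, K (F i)) -> K (\sum_(i <- r) F i).
Proof. by move=> h; apply: big_ind => //; [exact: K0|exact: KD]. Qed.

Definition eqv x y := K (x - y).
Lemma eqv_eq x y : x = y -> eqv x y.
Proof. by move=> ->; rewrite /eqv subrr; exact: K0. Qed.
Lemma eqv_refl x : eqv x x. Proof. exact: eqv_eq. Qed.
Lemma eqv_sym x y : eqv x y -> eqv y x.
Proof. by rewrite /eqv => /KN; rewrite opprB. Qed.
Lemma eqv_trans x y w : eqv x y -> eqv y w -> eqv x w.
Proof. by rewrite /eqv => h1 h2; have := KD h1 h2; rewrite addrA subrK. Qed.
Lemma eqv_add x y x' y' : eqv x x' -> eqv y y' -> eqv (x + y) (x' + y').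
Proof. by rewrite /eqv => h1 h2; have := KD h1 h2; rewrite -addrACA -opprD. Qed.
Lemma eqv_opp x y : eqv x y -> eqv (- x) (- y).
Proof. by rewrite /eqv => /KN; rewrite opprB opprK addrC. Qed.
Lemma eqv_sub x y x' y' : eqv x x' -> eqv y y' -> eqv (x - y) (x' - y').
Proof. by move=> h1 h2; apply: eqv_add => //; apply: eqv_opp. Qed.
Lemma eqv_K x : K x -> eqv x 0.
Proof. by rewrite /eqv subr0. Qed.
Lemma eqv_Kr x y : K (x - y) -> eqv x y.
Proof. by []. Qed.
Lemma eqv_subr x y w : eqv x (y + w) -> eqv (x - w) y.
Proof. by rewrite /eqv opprD addrA addrAC. Qed.
Lemma eqv_addr x y w : eqv (x - w) y -> eqv x (y + w).
Proof. by rewrite /eqv opprD addrA addrAC. Qed.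

Definition P a : Tens H := << [:: a; z - a] >>.

Lemma F1 a : S a -> eqv (P (z - a)) (- P a).
Proof.
move=> ha; apply: eqv_Kr; rewrite opprK addrC; apply: K_ideal.
rewrite /P subKr; apply: tideal_sym => //; exact: S_zsub.
Qed.

Lemma inCU3 a b c : S a -> S b -> S c -> a + b + c = z -> inC 3 S z << [:: a; b; c] >>.
Proof.
move=> ha hb hc e; apply: (@WdU _ (fun k => [/\ size k = 3%N, word_in S k & \sum_(x <- k) x = z])).
split => //; first by move=> x; rewrite !inE => /or3P [] /eqP ->.
by rewrite !big_cons big_nil addr0 addrA.
Qed.

Lemma F2 a b : S a -> S b -> form a b != 0 -> eqv (P (a + b)) (P a + P b).
Proof.
move=> ha hb hab.
pose c := z - (a + b).
have hc : S c by apply: (@S_of _ a); rewrite /c formDl formzl add0r formNl formDl formxx add0r formC opprK.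
have e : a + b + c = z by rewrite /c addrC subrK.
have hK := K_bd (inCU3 ha hb hc e).
rewrite bdE linU bdw3 in hK.
have fac : form a c = - form a b.
  by rewrite /c formDr formzr add0r formNr formDr formxx add0r.
have fbc : form b c = form a b.
  by rewrite /c formDr formzr add0r formNr formDr formxx addr0 -formC.
have eY : a + c = z - b.
  by apply/eqP; rewrite eq_sym subr_eq; apply/eqP; rewrite /c addrAC addrC subrK.
have eZ : b + c = z - a.
  by apply/eqP; rewrite eq_sym subr_eq; apply/eqP; rewrite /c addrAC (addrC b a) addrC subrK.
have eX : << [:: a + b; c] >> = P (a + b) by [].
have eY' : << [:: a + c; b] >> = P (z - b) by rewrite /P eY subKr.
have eZ' : << [:: b + c; a] >> = P (z - a) by rewrite /P eZ subKr.
rewrite fac fbc eX eY' eZ' mulrNz in hK.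
move: hK; set t := (form a b)%:~R : rat; move=> hK.
have t0 : t != 0 by rewrite intr_eq0.
have hXYZ : K (P (a + b) + P (z - b) + P (z - a)).
  have := KZ (- t)^-1 hK.
  rewrite -scaleNr -!scalerDr scalerA mulVf ?scale1r //.
  by rewrite oppr_eq0.
have h1 : eqv (P (a + b) - P b - P a) (P (a + b) + P (z - b) + P (z - a)).
  apply: eqv_add; first apply: eqv_add; try exact: eqv_refl.
    by apply: eqv_sym; apply: F1.
  by apply: eqv_sym; apply: F1.
have := eqv_trans h1 (eqv_K hXYZ).
by rewrite /eqv opprD addrA addrAC subr0.
Qed.
End Main.

End Work.

Module Work2.
Import Base Work.
Set Implicit Arguments. Unset Strict Implicit. Unset Printing Implicit Defensive.
Local Open Scope ring_scope.

Lemma id1 (V : zmodType) (X a Y b : V) : (X - a) - (Y - b) = (X + b) - (Y + a).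
Proof. by rewrite !opprD !opprK !addrA [LHS](AC 4 (((1*4)*3)*2)). Qed.

Section Main2.
Context (H : zmodType) (form : H -> H -> int) (z : H).
Hypothesis hf : alt_bilinear form.
Hypothesis hz : in_kermu form z.
Local Notation formDl := (Work.formDl hf).
Local Notation formDr := (Work.formDr hf).
Local Notation formC := (Work.formC hf).
Local Notation form0l := (Work.form0l hf).
Local Notation form0r := (Work.form0r hf).
Local Notation formNl := (Work.formNl hf).
Local Notation formNr := (Work.formNr hf).
Local Notation formxx := (Work.formxx hf).
Variable s0 : H.
Hypothesis hs0 : H1 form s0.

Local Notation S := (H1 form).
Local Notation K := (K form z).
Local Notation eqv := (eqv form z).
Local Notation P := (P z).

Lemma Aadd a b : S a -> S b -> S (a + b) -> eqv (P (a + b)) (P a + P b).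
Proof.
move=> ha hb hab.
case: (boolP (form a b == 0)) => [/eqP h0|hne]; last exact: F2.
have [w [h1 h2 h3]] := avoid3 hf ha hb hab.
have hw : S w := S_ofr hf h1.
have e1 := F2 hf hz hab hw h3.
have hbw : S (b + w).
  apply: (@S_of _ _ _ a); rewrite formDl (formC b) (formC w) h0 oppr0 add0r.
  by rewrite oppr_eq0.
have haw : form a (b + w) != 0 by rewrite formDr h0 add0r.
have e2 := F2 hf hz ha hbw haw.
have e3 := F2 hf hz hb hw h2.
rewrite addrA in e2.
apply: eqv_trans (eqv_sym (eqv_subr e1)) _.
apply: eqv_trans (eqv_sub (eqv_trans e2 (eqv_add (eqv_refl _ _ _) e3)) (eqv_refl _ _ (P w))) _.
by apply: eqv_eq; rewrite addrA addrK.
Qed.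

Definition D n := P (n + s0) - P s0.

Lemma L1a n s s' : ~ S n -> S s -> S s' -> S (s + s') ->
  eqv (P (n + s) - P s) (P (n + s') - P s').
Proof.
move=> hn hs hs' hss.
have h1 : eqv (P (n + s + s')) (P (n + s) + P s').
  apply: Aadd => //; first exact: S_nadd.
  by rewrite -addrA; apply: S_nadd.
have h2 : eqv (P (n + s' + s)) (P (n + s') + P s).
  apply: Aadd => //; first exact: S_nadd.
  by rewrite -addrA (addrC s' s); apply: S_nadd.
rewrite addrAC in h2.
have := eqv_trans (eqv_sym h1) h2.
by rewrite /eqv/Work.eqv id1.
Qed.

Lemma L1 n s : ~ S n -> S s -> eqv (P (n + s) - P s) (D n).
Proof.
move=> hn hs; rewrite /D.
case: (classic (S (s + s0))) => hss; first exact: L1a.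
have hs2 : S (s + s) := S_dbl hf hs.
apply: eqv_trans (L1a hn hs hs2 (S_trpl hf hs)) _.
apply: L1a => //.
by rewrite addrAC; apply: S_nadd.
Qed.

Definition G h : Tens H :=
  if excluded_middle_informative (S h) then P h else D h.

Lemma G_S h : S h -> G h = P h.
Proof. by rewrite /G; case: excluded_middle_informative. Qed.
Lemma G_N h : ~ S h -> G h = D h.
Proof. by rewrite /G; case: excluded_middle_informative. Qed.

Lemma G2 u v : eqv (G (u + v)) (G u + G v).
Proof.
case: (classic (S u)) => hu; case: (classic (S v)) => hv.
- case: (classic (S (u + v))) => huv.
    by rewrite !G_S //; apply: Aadd.
  rewrite G_N // !G_S //.
  apply: eqv_trans (eqv_sym (L1 huv hv)) _.
  have h1 : eqv (P (u + (v + v))) (P u + P (v + v)).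
    apply: Aadd => //; first exact: S_dbl.
    by rewrite addrA; apply: S_nadd.
  have h2 := Aadd hv hv (S_dbl hf hv).
  rewrite -addrA; apply: eqv_trans (eqv_sub (eqv_trans h1 (eqv_add (eqv_refl _ _ _) h2)) (eqv_refl _ _ (P v))) _.
  by apply: eqv_eq; rewrite addrA addrK.
- have huv : S (u + v) by apply: S_addn.
  rewrite (G_S huv) (G_S hu) (G_N hv).
  apply: eqv_sym; apply: eqv_trans (eqv_add (eqv_refl _ _ (P u)) (eqv_sym (L1 hv hu))) _.
  by apply: eqv_eq; rewrite addrC subrK (addrC v u).
- have huv : S (u + v) by apply: S_nadd.
  rewrite (G_S huv) (G_N hu) (G_S hv).
  apply: eqv_sym; apply: eqv_trans (eqv_add (eqv_sym (L1 hu hv)) (eqv_refl _ _ (P v))) _.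
  by apply: eqv_eq; rewrite subrK.
- have huv : ~ S (u + v).
    by move=> h; apply: h => y; rewrite formDl (null hu) (null hv) addr0.
  rewrite (G_N huv) (G_N hu) (G_N hv).
  have hvs : S (v + s0) by apply: S_nadd.
  apply: eqv_sym; apply: eqv_trans (eqv_add (eqv_sym (L1 hu hvs)) (eqv_refl _ _ (D v))) _.
  by apply: eqv_eq; rewrite /D subrKA addrA.
Qed.

Lemma G3 x : eqv (G x + G (z - x)) 0.
Proof.
apply: eqv_trans (eqv_sym (G2 x (z - x))) _.
rewrite addrC subrK G_N; last exact: notSz.
have h0 : ~ S 0 by move=> h; apply: h => y; apply: form0l.
have h1 := G2 s0 (- s0).
rewrite subrr (G_N h0) /D add0r subrr (G_S hs0) (G_S (S_opp hf hs0)) in h1.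
have h2 := F1 hf hz (S_opp hf hs0).
rewrite opprK in h2.
rewrite /D.
apply: eqv_trans (eqv_sub h2 (eqv_refl _ _ (P s0))) _.
rewrite -opprD addrC; apply: eqv_trans (eqv_opp (eqv_sym h1)) _.
by apply: eqv_eq; rewrite oppr0.
Qed.

End Main2.

End Work2.

Module Work3.
Import Base Work Work2.
Set Implicit Arguments. Unset Strict Implicit. Unset Printing Implicit Defensive.
Local Open Scope ring_scope.

Lemma lin_tmul (H : zmodType) (F : seq H -> Tens H) (u w : Tens H) :
  lin F (tmul u w) = lin (fun k => lin (fun l => F (k ++ l)) w) u.
Proof.
rewrite tmulE lin_lin; apply: eq_lin => k _; rewrite lin_lin.
by apply: eq_lin => l _; rewrite linU.
Qed.

Section Main3.
Context (H : zmodType) (form : H -> H -> int) (z : H).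
Hypothesis hf : alt_bilinear form.
Hypothesis hz : in_kermu form z.
Variable s0 : H.
Hypothesis hs0 : H1 form s0.

Local Notation S := (H1 form).
Local Notation K := (K form z).
Local Notation G := (G form z s0).

Definition pi (k : seq H) : Tens H :=
  match k with [:: x; y] => if x + y == z then G x else 0 | _ => 0 end.

Lemma pi_long k : (3 <= size k)%N -> pi k = 0.
Proof. by case: k => [|x [|y [|w k]]]. Qed.

Lemma pi_sym x y : K (pi [:: x; y] + pi [:: y; x]).
Proof.
rewrite /= (addrC y x); case: eqP => [e|_]; last by rewrite addr0; exact: K0.
have ey : y = z - x by rewrite -e (addrC x y) addrK.
by have := G3 hf hz hs0 x; rewrite /eqv subr0 -ey.
Qed.

Lemma inv g : tideal (@allH H) (fun g => ext_rel (@allH H) g \/ ihat_gen g) g ->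
  Wd (fun k => (2 <= size k)%N) g /\ K (lin pi g).
Proof.
elim => {g}.
- move=> g [[v [hv ->]] | [u [v [x ->]]]].
  + split.
      rewrite tmulE; apply: Wd_lin => k hk; apply: Wd_lin => l hl; apply: WdU.
      by rewrite size_cat (hv k hk).1 (hv l hl).1.
    rewrite lin_tmul.
    set E := lin _ v.
    have eE : E = lin (fun k => lin (fun l => pi (l ++ k)) v) v by rewrite /E lin_swap.
    have -> : E = 2^-1 *: (E + E).
      by rewrite -mulr2n -scaler_nat scalerA mulVf ?scale1r.
    apply: KZ; rewrite [X in E + X]eE /E -lin_addf; apply: K_lin => k hk.
    rewrite -lin_addf; apply: K_lin => l hl.
    move: (hv k hk).1 (hv l hl).1.
    case: k {hk} => [|x [|]] //; case: l {hl} => [|y [|]] // _ _.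
    exact: pi_sym.
  + split.
      by apply: WdB; [apply: WdB|]; apply: WdU.
    rewrite !linB !linU /= (addrC x v) addrA (addrC x u) addrA (addrC v u).
    case: eqP => _; last by rewrite !subr0; exact: K0.
    by have := G2 hf hz hs0 u v; rewrite /eqv opprD addrA.
- by split; [exact: Wd0 | rewrite lin0; exact: K0].
- move=> u v _ [hu ku] _ [hv kv]; split; first exact: WdD.
  by rewrite linD; apply: KD.
- move=> a u _ [hu ku]; split; first exact: WdZ.
  by rewrite linZ; apply: KZ.
- move=> a u _ _ [hu ku]; split.
    rewrite tmulE; apply: Wd_lin => k hk; apply: Wd_lin => l hl; apply: WdU.
    by rewrite size_cat (leq_trans (hu l hl)) // leq_addl.
  rewrite lin_tmul; apply: K_lin => k hk.
  case: k {hk} => [|x k] //=.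
  have -> : lin (fun l => pi (x :: k ++ l)) u = lin (fun _ => 0) u.
    apply: eq_lin => l hl; apply: pi_long => /=.
    by rewrite size_cat ltnS (leq_trans (hu l hl)) // leq_addl.
  rewrite lin_zero; exact: K0.
- move=> a u _ _ [hu ku]; split.
    rewrite tmulE; apply: Wd_lin => k hk; apply: Wd_lin => l hl; apply: WdU.
    by rewrite size_cat (leq_trans (hu k hk)) // leq_addr.
  rewrite lin_tmul lin_swap; apply: K_lin => k hk.
  case: k {hk} => [|x k].
    by rewrite (@eq_lin _ _ pi) // => l _; rewrite cats0.
  have -> : lin (fun l => pi (l ++ x :: k)) u = lin (fun _ => 0) u.
    apply: eq_lin => l hl; apply: pi_long => /=.
    by rewrite size_cat /= addnS ltnS (leq_trans (hu l hl)) // leq_addr.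
  rewrite lin_zero; exact: K0.
Qed.

End Main3.

End Work3.

Import Base Work Work2 Work3.

Lemma tideal_mono (H : zmodType) (form : H -> H -> int) t :
  tideal (H1 form) (ext_rel (H1 form)) t ->
  tideal (@allH H) (fun g => ext_rel (@allH H) g \/ ihat_gen g) t.
Proof.
elim => {t}.
- move=> g [v [hv ->]]; apply: tideal_gen; left; exists v; split => //.
  by move=> k hk; split; [exact: (hv k hk).1 | by []].
- exact: tideal0.
- by move=> u v _ hu _ hv; apply: tidealD.
- by move=> a u _ hu; apply: tidealZ.
- by move=> a u _ _ hu; apply: tidealMl.
- by move=> a u _ _ hu; apply: tidealMr.
Qed.

Lemma X3_ideal (H : zmodType) (a b c : H) :
  tideal (@allH H) (fun g => ext_rel (@allH H) g \/ ihat_gen g)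
    (<< [:: a + b; c] >> + << [:: a + c; b] >> + << [:: b + c; a] >>).
Proof.
have hG : forall g, ext_rel (@allH H) g -> ext_rel (@allH H) g \/ ihat_gen g by left.
have R : tideal (@allH H) (fun g => ext_rel (@allH H) g \/ ihat_gen g)
   (<< [:: a + b; c] >> - << [:: a; c + b] >> - << [:: b; c + a] >>).
  by apply: tideal_gen; right; exists a, b, c.
have E1 := tideal_sym (x := a) (y := c + b) hG I I.
have E2 := tideal_sym (x := b) (y := c + a) hG I I.
have := tidealD (tidealD R E1) E2.
rewrite (addrC c b) (addrC c a).
move: (<< [:: a + b; c] >>) (<< [:: a; b + c] >>) (<< [:: b; a + c] >>)
  (<< [:: b + c; a] >>) (<< [:: a + c; b] >>) => X A B Z Y.
by rewrite [X - A - B + _]addrAC subrKA subrKA addrAC.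
Qed.

Theorem proposition3p3 (H : zmodType) (form : H -> H -> int) (z : H) :
  alt_bilinear form -> in_kermu form z ->
  forall c : Tens H, inC 2 (H1 form) z c ->
    ( (tideal (H1 form) (ext_rel (H1 form)) (bd form c)
       /\ tideal (@allH H) (fun g => ext_rel (@allH H) g \/ ihat_gen g) c)
    <-> exists d : Tens H, inC 3 (H1 form) z d /\
          tideal (H1 form) (ext_rel (H1 form)) (c - bd form d)).
Proof.
move=> hf hz c hc; split.
- move=> [_ hI].
  case: (classic (exists s, H1 form s)) => [[s0 hs0] | hno].
    have [_ hK] := Work3.inv hf hz hs0 hI.
    suff -> : c = lin (Work3.pi form z s0) c by [].
    rewrite -[c in LHS]lin_id; apply: eq_lin => k hk.
    have [hsz hw hsum] := hc k hk.
    case: k hk hsz hw hsum => [|x [|y [|w k]]] //= _ _ hw.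
    rewrite !big_cons big_nil addr0 => e.
    rewrite e eqxx G_S; last by apply: hw; rewrite inE eqxx.
    by rewrite /P -e (addrC x y) addrK.
  have c0 : c = 0.
    apply/malgP => k; rewrite mcoeff0; apply: mcoeff_outdom; apply/negP => hk.
    have [hsz hw _] := hc k hk.
    case: k hk hsz hw => [|x k] //= _ _ hw; apply: hno; exists x.
    by apply: hw; rewrite inE eqxx.
  exists 0; split; first exact: inC0.
  by rewrite c0 bdE lin0 subrr; apply: tideal0.
- move=> [d [hd hI]]; split.
    rewrite bdE (@eq_lin _ _ (fun _ => 0)) ?lin_zero; first exact: tideal0.
    move=> k hk; have [hsz _ hsum] := hc k hk.
    case: k hk hsz hsum => [|x [|y [|w k]]] //= _ _.
    rewrite !big_cons big_nil addr0 => e.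
    have -> : y = z - x by rewrite -e (addrC x y) addrK.
    rewrite bdw2 (Work.formDr hf) (Work.formzr hf hz) (Work.formNr hf) (Work.formxx hf).
    by rewrite subrr mulr0z oppr0 scale0r.
  have -> : c = (c - bd form d) + bd form d by rewrite subrK.
  apply: tidealD; first exact: (tideal_mono _ _ _ hI).
  rewrite bdE; apply: tideal_lin => k hk.
  have [hsz _ hsum] := hd k hk.
  case: k hk hsz hsum => [|a [|b [|c0 [|w k]]]] //= _ _.
  rewrite !big_cons big_nil addr0 addrA => e.
  have fab : form a b = - form a c0.
    have := Work.formzr hf hz a; rewrite -e !(Work.formDr hf) (Work.formxx hf) add0r.
    by move/eqP; rewrite addr_eq0 => /eqP.
  have fbc : form b c0 = - form a c0.
    have := Work.formzr hf hz b; rewrite -e !(Work.formDr hf) (Work.formxx hf) addr0.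
    rewrite (Work.formC hf b a) fab opprK => /eqP; rewrite addrC addr_eq0 => /eqP.
    done.
  rewrite bdw3 fab fbc !mulrNz !opprK -scaleNr opprK -!scalerDr.
  by apply: tidealZ; apply: X3_ideal.
Qed.
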